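(* Let $\mathcal C=\mathcal C(I,A,(\rho_i)_{i\in I},(C^a)_{a\in A})$ be a connected Cartan scheme and $\mathcal R=\mathcal R(\mathcal C,(R^a)_{a\in A})$ a root system of type $\mathcal C$. Let $a\in A$ and $i,j\in I$ with $i\neq j$. If $c^a_{ij}=0$, then $c^a_{jl}=c^{\rho_i(a)}_{jl}$ for all $l\in I$.
   Context: Let $I$ be a nonempty finite set and $\{\alpha_i\mid i\in I\}$ the standard basis of $\mathbb Z^I$; $\mathbb N_0=\{0,1,2,\dots\}$. A generalized Cartan matrix is $C=(c_{ij})_{i,j\in I}\in\mathbb Z^{I\times I}$ with $c_{ii}=2$, $c_{jk}\le0$ for $j\ne k$, and $c_{ij}=0\Rightarrow c_{ji}=0$. A Cartan scheme $\mathcal C=\mathcal C(I,A,(\rho_i)_{i\in I},(C^a)_{a\in A})$ consists of a nonempty set $A$, maps $\rho_i:A\to A$ and generalized Cartan matrices $C^a=(c^a_{jk})_{j,k\in I}$ such that (C1) $\rho_i^2=\mathrm{id}$ and (C2) $c^a_{ij}=c^{\rho_i(a)}_{ij}$ for all $a\in A$, $i,j\in I$. It is connected if the group generated by the $\rho_i$ acts transitively on $A$. For $i\in I$, $a\in A$ let $\sigma_i^a\in\mathrm{Aut}(\mathbb Z^I)$, $\sigma_i^a(\alpha_j)=\alpha_j-c^a_{ij}\alpha_i$. A root system of type $\mathcal C$ is a family $\mathcal R=\mathcal R(\mathcal C,(R^a)_{a\in A})$ of subsets $R^a\subset\mathbb Z^I$ such that, writing $R^a_+=R^a\cap\mathbb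 N_0^I$ and $m^a_{i,j}=|R^a\cap(\mathbb N_0\alpha_i+\mathbb N_0\alpha_j)|$, for all $a\in A$, $i,j\in I$: (R1) $R^a=R^a_+\cup(-R^a_+)$; (R2) $R^a\cap\mathbb Z\alpha_i=\{\alpha_i,-\alpha_i\}$; (R3) $\sigma_i^a(R^a)=R^{\rho_i(a)}$; (R4) if $i\neq j$ and $m^a_{i,j}$ is finite then $(\rho_i\rho_j)^{m^a_{i,j}}(a)=a$. *)

(* Defs.v *)
From HB Require Import structures.
From mathcomp Require Import all_boot all_order all_algebra.
Set Implicit Arguments. Unset Strict Implicit. Unset Printing Implicit Defensive.
Import Order.TTheory GRing.Theory Num.Theory.
Local Open Scope ring_scope.

(* Z^I is represented as finite functions I -> int; alpha i is the i-th
   standard basis vector. *)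
Definition alpha (I : finType) (i : I) : {ffun I -> int} :=
  [ffun k => (k == i)%:R].

Definition gen_cartan (I : finType) (c : I -> I -> int) : Prop :=
  (forall i, c i i = 2) /\
  (forall j k, j != k -> c j k <= 0) /\
  (forall i j, c i j = 0 -> c j i = 0).

Definition cartan_scheme (I : finType) (A : Type) (rho : I -> A -> A)
    (C : A -> I -> I -> int) : Prop :=
  (exists a : A, True) /\
  (forall a, gen_cartan (C a)) /\
  (forall i a, rho i (rho i a) = a) /\
  (forall a i j, C a i j = C (rho i a) i j).

(* connected: the group generated by the rho_i acts transitively on A
   (as the rho_i are involutions, this group consists of words in rho_i) *)
Definition connected_scheme (I : finType) (A : Type) (rho : I -> A -> A) : Prop :=
  forall a b : A, exists s : seq I, foldr rho a s = b.

(* sigma_i^a (alpha_j) = alpha_j - c^a_{ij} alpha_i, extended Z-linearly *)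
Definition sigma (I : finType) (A : Type) (C : A -> I -> I -> int)
    (i : I) (a : A) (v : {ffun I -> int}) : {ffun I -> int} :=
  [ffun k => v k - (\sum_(j : I) C a i j * v j) * alpha i k].

Definition nonneg (I : finType) (v : {ffun I -> int}) : Prop :=
  forall k, 0 <= v k.

Definition has_card (T : eqType) (P : T -> Prop) (m : nat) : Prop :=
  exists s : seq T, [/\ uniq s, size s = m & forall x, P x <-> x \in s].

Definition zscale (I : finType) (c : int) (v : {ffun I -> int}) :
  {ffun I -> int} := [ffun k => c * v k].

Definition rank2_part (I : finType) (R : {ffun I -> int} -> Prop) (i j : I)
    (v : {ffun I -> int}) : Prop :=
  R v /\ exists p q : nat, v = [ffun k => (p%:Z) * alpha i k + (q%:Z) * alpha j k].

Definition root_system (I : finType) (A : Type) (rho : I -> A -> A)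
    (C : A -> I -> I -> int) (R : A -> {ffun I -> int} -> Prop) : Prop :=
  (forall a v, R a v <-> ((R a v /\ nonneg v) \/ (R a (zscale (-1) v) /\ nonneg (zscale (-1) v)))) /\
  (forall a i v, (R a v /\ exists k : int, v = zscale k (alpha i)) <->
                 (v = alpha i \/ v = zscale (-1) (alpha i))) /\
  (forall a i v, R (rho i a) v <-> exists w, R a w /\ sigma C i a w = v) /\
  (forall a i j m, i != j -> has_card (rank2_part (R a) i j) m ->
     iter m (fun b => rho i (rho j b)) a = a).

(* Main.v *)
Require Import Defs.
From mathcomp Require Import all_boot all_order all_algebra.
From mathcomp Require Import ring lra zify.
Import Order.TTheory GRing.Theory Num.Theory.
Local Open Scope ring_scope.

Lemma sum_delta (I : finType) (F : I -> int) (x : I) :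
  \sum_(m : I) F m * (m == x)%:R = F x.
Proof.
rewrite (bigD1 x) //= eqxx mulr1 big1 ?addr0 // => m /negbTE ->.
by rewrite mulr0.
Qed.

Lemma sigmaE (I : finType) (A : Type) (C : A -> I -> I -> int) i a v k :
  sigma C i a v k = v k - (\sum_(j : I) C a i j * v j) * (k == i)%:R.
Proof. by rewrite /sigma ffunE /alpha ffunE. Qed.

Lemma key (I : finType) (A : Type) (rho : I -> A -> A)
    (C : A -> I -> I -> int) (R : A -> {ffun I -> int} -> Prop) :
  cartan_scheme rho C -> root_system rho C R ->
  forall (b : A) (i j l : I), i != j -> l != i -> l != j -> C b i j = 0 ->
  C (rho i b) j l <= C b j l.
Proof.
move=> [_ [GC [Hinv HC2]]] [R1 [R2 [R3 _]]] b i j l ij li lj Cij.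
set c := C b j l; set d := C b i l; set e := C (rho i b) j l.
have Cji' : C (rho i b) j i = 0.
  by case: (GC (rho i b)) => _ [_ H]; apply: H; rewrite -HC2.
have Cjj' : C (rho i b) j j = 2 by case: (GC (rho i b)).
have Cjj : C (rho j b) j j = 2 by case: (GC (rho j b)).
pose v0 := alpha l.
have R0 : R (rho j b) v0.
  by case: (proj2 (R2 (rho j b) l v0) (or_introl erefl)).
set v1 := sigma C j (rho j b) v0.
have R1' : R b v1.
  rewrite -[b in R b](Hinv j b). apply/R3; exists v0; split => //.
have v1E : forall k, v1 k = (k == l)%:R - c * (k == j)%:R.
  move=> k; rewrite /v1 sigmaE /v0.
  under eq_bigr => m _ do rewrite /alpha ffunE.
  by rewrite sum_delta /alpha ffunE -HC2.
set v2 := sigma C i b v1.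
have R2' : R (rho i b) v2 by apply/R3; exists v1.
have v2E : forall k, v2 k = (k == l)%:R - c * (k == j)%:R - d * (k == i)%:R.
  move=> k; rewrite /v2 sigmaE.
  under eq_bigr => m _ do rewrite v1E mulrBr mulrCA.
  by rewrite sumrB -mulr_sumr !sum_delta Cij mulr0 subr0 v1E.
set v3 := sigma C j (rho i b) v2.
have R3' : R (rho j (rho i b)) v3 by apply/R3; exists v2.
have S3 : \sum_(m : I) C (rho i b) j m * v2 m = e - c * 2.
  under eq_bigr => m _ do rewrite v2E !mulrBr (mulrCA _ c) (mulrCA _ d).
  by rewrite !sumrB -!mulr_sumr !sum_delta Cji' Cjj' mulr0 subr0.
have v3l : v3 l = 1.
  by rewrite /v3 sigmaE (negbTE lj) mulr0 subr0 v2E eqxx (negbTE lj) (negbTE li) !mulr0 !subr0.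
have v3j : v3 j = c - e.
  rewrite /v3 sigmaE eqxx mulr1 S3 v2E eqxx eq_sym (negbTE lj) eq_sym (negbTE ij).
  rewrite mulr0 subr0 mulr1. rewrite -[false%:R]/(0 : int); ring.
case: (proj1 (R1 _ v3) R3') => [[_ Hn] | [_ Hn]].
  by have := Hn j; rewrite v3j subr_ge0.
by have := Hn l; rewrite /zscale ffunE v3l.
Qed.

Theorem lemma4p5 (I : finType) (A : Type) (rho : I -> A -> A)
    (C : A -> I -> I -> int) (R : A -> {ffun I -> int} -> Prop) :
  cartan_scheme rho C -> connected_scheme rho -> root_system rho C R ->
  forall (a : A) (i j : I), i != j -> C a i j = 0%R ->
  forall l : I, C a j l = C (rho i a) j l.
Proof.
move=> HCS _ HRS a i j ij Cij l.
have HCS' := HCS; case: HCS' => [_ [GC [Hinv HC2]]].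
have Cij' : C (rho i a) i j = 0 by rewrite -HC2.
case: (eqVneq l i) => [-> | li].
  case: (GC a) => _ [_ H]; case: (GC (rho i a)) => _ [_ H'].
  by rewrite (H _ _ Cij) (H' _ _ Cij').
case: (eqVneq l j) => [-> | lj].
  by case: (GC a) => -> _; case: (GC (rho i a)) => -> _.
apply/eqP; rewrite eq_le; apply/andP; split.
  have := key _ _ _ _ _ HCS HRS _ _ _ _ ij li lj Cij'; by rewrite Hinv.
exact: key _ _ _ _ _ HCS HRS _ _ _ _ ij li lj Cij.
Qed.
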